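(* Let $q$ be an odd prime power, $d$ a positive integer, and $\varphi_d$ the coloring defined below. Let $A,B \subseteq (\mathbb{F}_q^* )^d$ be disjoint sets of vectors and $\alpha \in C_d$ a color such that $\varphi_d(a,b) = \alpha$ for all $a \in A$ and $b\in B$. Then $A$ confines $B$ or $B$ confines $A$ (or both).
   Context: $\mathbb{F}_q^*$ is the set of nonzero elements of $\mathbb{F}_q$, endowed with an arbitrary fixed linear order; $(\mathbb{F}_q^* )^d$ is ordered lexicographically with respect to it. Let $C_d = \mathrm{DOT} \sqcup \mathrm{ZERO}\sqcup\mathrm{UP}\sqcup\mathrm{DOWN}$, where $\mathrm{DOT} = \mathbb{F}_q^*$ and ZERO, UP, DOWN are three disjoint copies of $\{1,\dots,d\}\times \mathbb{F}_q$. For distinct $x<y$ in $(\mathbb{F}_q^* )^d$, let $i$ be the first coordinate where $x$ and $y$ differ, and $x\cdot y$ the standard dot product; $\varphi_d(x,y)=\varphi_d(y,x)$ is $(i,x_i+y_i)$ in ZERO if $x\cdot y=0$; $(i,x_i+y_i)$ in UP if $x\cdot y\ne 0$ and $x\cdot y=x\cdot x$; $(i,x_i+y_i)$ in DOWN if $x\cdot y\notin\{0,x\cdot x\}$ and $x\cdot y=y\cdot y$; and $x\cdot y\in\mathrm{DOT}$ otherwise. $A$ confines $B$ means: for each $a \in A$, $a\cdot x = a\cdot y$ for all $x,y \in B$. *)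

(* Defs.v *)
From HB Require Import structures.
From mathcomp Require Import all_boot all_order all_algebra all_field.
Set Implicit Arguments. Unset Strict Implicit. Unset Printing Implicit Defensive.
Import GRing.Theory.
Local Open Scope ring_scope.

(* Vectors of F^d are finite functions 'I_d -> F (coordinate i is 0-based). *)
Notation vec F d := {ffun 'I_d -> F}.

Definition dotv (F : fieldType) (d : nat) (x y : vec F d) : F :=
  \sum_(i < d) x i * y i.

Definition nzvec (F : fieldType) (d : nat) (x : vec F d) : bool :=
  [forall i, x i != 0].

Definition lin_order_nz (F : fieldType) (lt : rel F) : Prop :=
  [/\ (forall x, x != 0 -> ~~ lt x x),
      (forall x y z, x != 0 -> y != 0 -> z != 0 -> lt x y -> lt y z -> lt x z) &
      (forall x y, x != 0 -> y != 0 -> x != y -> lt x y || lt y x)].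

Definition firstdiff (F : fieldType) (d : nat) (x y : vec F d) : option 'I_d :=
  [pick i | (x i != y i) && [forall j : 'I_d, (j < i)%N ==> (x j == y j)]].

Definition lexlt (F : fieldType) (lt : rel F) (d : nat) (x y : vec F d) : bool :=
  if firstdiff x y is Some i then lt (x i) (y i) else false.

(* The color set C_d = DOT ⊔ ZERO ⊔ UP ⊔ DOWN; DOT holds the (nonzero) dot product. *)
Inductive color (F : fieldType) (d : nat) : Type :=
| DOT of F
| ZERO of 'I_d & F
| UP of 'I_d & F
| DOWN of 'I_d & F.

(* the coloring for x < y (lexicographically) *)
Definition phi_ord (F : fieldType) (d : nat) (x y : vec F d) : color F d :=
  if firstdiff x y is Some i then
    let s := x i + y i in
    let xy := dotv x y in
    if xy == 0 then ZERO i s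
    else if xy == dotv x x then UP i s
    else if xy == dotv y y then DOWN i s
    else DOT d xy
  else DOT d (dotv x y) (* unreachable for distinct x, y *).

Definition phi (F : fieldType) (lt : rel F) (d : nat) (x y : vec F d) : color F d :=
  if lexlt lt x y then phi_ord x y else phi_ord y x.

Definition confines (F : finFieldType) (d : nat) (A B : {set vec F d}) : Prop :=
  forall a, a \in A -> forall x y, x \in B -> y \in B -> dotv a x = dotv a y.

(* Main.v *)
Require Import Defs.
From HB Require Import structures.
From mathcomp Require Import all_boot all_order all_algebra all_field.
Local Open Scope ring_scope.
Import GRing.Theory.
Set Implicit Arguments. Unset Strict Implicit.

Lemma firstdiffC (F : fieldType) (d : nat) (x y : vec F d) :
  firstdiff x y = firstdiff y x.
Proof.
rewrite /firstdiff; apply: eq_pick => k /=; rewrite eq_sym; congr (_ && _).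
by apply: eq_forallb => j; rewrite eq_sym.
Qed.

Lemma dotvC (F : fieldType) (d : nat) (x y : vec F d) : dotv x y = dotv y x.
Proof. by rewrite /dotv; apply: eq_bigr => i _; rewrite mulrC. Qed.

Lemma phi_ordDOT (F : fieldType) (d : nat) (x y : vec F d) c :
  phi_ord x y = DOT d c -> dotv x y = c.
Proof.
rewrite /phi_ord; case: (firstdiff x y) => [i|]; last by case.
by do 3 (case: ifP => _ //); case.
Qed.

Lemma phi_ordZERO (F : fieldType) (d : nat) (x y : vec F d) i s :
  phi_ord x y = ZERO i s -> dotv x y = 0.
Proof.
rewrite /phi_ord; case: (firstdiff x y) => [j|] //.
by case: ifP => [/eqP|_] //; do 2 (case: ifP => _ //).
Qed.

Lemma phi_ordUP (F : fieldType) (d : nat) (x y : vec F d) i s :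
  phi_ord x y = UP i s ->
  [/\ firstdiff x y = Some i, x i + y i = s & dotv x y = dotv x x].
Proof.
rewrite /phi_ord; case: (firstdiff x y) => [j|] //.
case: ifP => _ //; case: ifP => [/eqP e|_]; first by case=> -> <-.
by case: ifP => _.
Qed.

Lemma phi_ordDOWN (F : fieldType) (d : nat) (x y : vec F d) i s :
  phi_ord x y = DOWN i s ->
  [/\ firstdiff x y = Some i, x i + y i = s & dotv x y = dotv y y].
Proof.
rewrite /phi_ord; case: (firstdiff x y) => [j|] //.
case: ifP => _ //; case: ifP => _ //; case: ifP => [/eqP e|_] //.
by case=> -> <-.
Qed.

Lemma phiUP (F : fieldType) (lt : rel F) (d : nat) (a b : vec F d) i s :
  phi lt a b = UP i s ->
  a i + b i = s /\
  (if lt (a i) (b i) then dotv a b = dotv a a else dotv b a = dotv b b).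
Proof.
rewrite /phi; case: ifP => hl.
  move=> /phi_ordUP [h1 h2 h3]; move: hl; rewrite /lexlt h1 => ->; by [].
move=> /phi_ordUP [h1 h2 h3]; move: hl; rewrite /lexlt firstdiffC h1 => ->.
by rewrite addrC.
Qed.

Lemma phiDOWN (F : fieldType) (lt : rel F) (d : nat) (a b : vec F d) i s :
  phi lt a b = DOWN i s ->
  a i + b i = s /\
  (if lt (a i) (b i) then dotv b a = dotv b b else dotv a b = dotv a a).
Proof.
rewrite /phi; case: ifP => hl.
  move=> /phi_ordDOWN [h1 h2 h3]; move: hl; rewrite /lexlt h1 => ->.
  by rewrite dotvC.
move=> /phi_ordDOWN [h1 h2 h3]; move: hl; rewrite /lexlt firstdiffC h1 => ->.
by rewrite addrC dotvC.
Qed.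

Lemma phiDOT (F : fieldType) (lt : rel F) (d : nat) (a b : vec F d) c :
  phi lt a b = DOT d c -> dotv a b = c.
Proof.
rewrite /phi; case: ifP => _; first exact: phi_ordDOT.
by move/phi_ordDOT; rewrite dotvC.
Qed.

Lemma phiZERO (F : fieldType) (lt : rel F) (d : nat) (a b : vec F d) i s :
  phi lt a b = ZERO i s -> dotv a b = 0.
Proof.
rewrite /phi; case: ifP => _; first exact: phi_ordZERO.
by move/phi_ordZERO; rewrite dotvC.
Qed.

Theorem lemma3p8 (F : finFieldType) (lt : rel F) (d : nat)
  (A B : {set {ffun 'I_d -> F}}) (alpha : color F d) :
  odd #|F| ->
  lin_order_nz lt ->
  (0 < d)%N ->
  (forall x, x \in A -> nzvec x) ->
  (forall x, x \in B -> nzvec x) ->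
  [disjoint A & B] ->
  (forall a b, a \in A -> b \in B -> phi lt a b = alpha) ->
  confines A B \/ confines B A.
Proof.
move=> _ _ _ _ _ _ H.
case: (pickP (fun x => x \in A)) => [a0 ha0|hA]; last first.
  by left=> a; rewrite hA.
case: (pickP (fun x => x \in B)) => [b0 hb0|hB]; last first.
  by right=> b; rewrite hB.
case: alpha H => [c|i s|i s|i s] H.
- left=> a ha x y hx hy.
  by rewrite (phiDOT (H a x ha hx)) (phiDOT (H a y ha hy)).
- left=> a ha x y hx hy.
  by rewrite (phiZERO (H a x ha hx)) (phiZERO (H a y ha hy)).
- have Hc : forall a b, a \in A -> b \in B -> lt (a i) (b i) = lt (a0 i) (b0 i).
    move=> a b ha hb.
    have [e1 _] := phiUP (H a b0 ha hb0).
    have [e2 _] := phiUP (H a0 b0 ha0 hb0).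
    have [e3 _] := phiUP (H a0 b ha0 hb).
    have -> : a i = a0 i by apply: (addIr (b0 i)); rewrite e1 e2.
    suff -> : b i = b0 i by [].
    by apply: (addrI (a0 i)); rewrite e3 e2.
  case E: (lt (a0 i) (b0 i)).
    left=> a ha x y hx hy.
    have [_ h1] := phiUP (H a x ha hx); have [_ h2] := phiUP (H a y ha hy).
    by rewrite Hc // E in h1; rewrite Hc // E in h2; rewrite h1 h2.
  right=> b hb x y hx hy.
  have [_ h1] := phiUP (H x b hx hb); have [_ h2] := phiUP (H y b hy hb).
  by rewrite Hc // E in h1; rewrite Hc // E in h2; rewrite h1 h2.
- have Hc : forall a b, a \in A -> b \in B -> lt (a i) (b i) = lt (a0 i) (b0 i).
    move=> a b ha hb.
    have [e1 _] := phiDOWN (H a b0 ha hb0).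
    have [e2 _] := phiDOWN (H a0 b0 ha0 hb0).
    have [e3 _] := phiDOWN (H a0 b ha0 hb).
    have -> : a i = a0 i by apply: (addIr (b0 i)); rewrite e1 e2.
    suff -> : b i = b0 i by [].
    by apply: (addrI (a0 i)); rewrite e3 e2.
  case E: (lt (a0 i) (b0 i)).
    right=> b hb x y hx hy.
    have [_ h1] := phiDOWN (H x b hx hb); have [_ h2] := phiDOWN (H y b hy hb).
    by rewrite Hc // E in h1; rewrite Hc // E in h2; rewrite h1 h2.
  left=> a ha x y hx hy.
  have [_ h1] := phiDOWN (H a x ha hx); have [_ h2] := phiDOWN (H a y ha hy).
  by rewrite Hc // E in h1; rewrite Hc // E in h2; rewrite h1 h2.
Qed.
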